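(* Let $n \in \mathbb{N}$ and let $p = (p_1,\ldots,p_n) \in \Delta_n$. Then \[ \frac{n \sum_{i=1}^n p_i^2 - 1}{2\,(n\|p\|_\infty + 1)} \;\le\; \sum_{i=1}^n p_i \log(p_i) + \log(n) \;\le\; n \sum_{i=1}^n p_i^2 - 1 . \] In particular, whenever $p \neq \frac{1}{n}1_n$ (so that $n\sum_i p_i^2 - 1 > 0$), \[ \frac{1}{2(n \|p\|_\infty + 1)} \le \frac{\sum_{i = 1}^{n} p_i \log(p_i) + \log(n)}{n \sum_{i = 1}^{n} p_i^2 - 1} \le 1. \]
   Context: $\Delta_n := \{a \in \mathbb{R}_+^n : \sum_{i=1}^n a_i = 1\}$ is the probability simplex, $\|p\|_\infty = \max_i |p_i|$, $1_n$ is the all-ones vector in $\mathbb{R}^n$, and the convention $0 \log 0 = 0$ is used. *)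

(* Defs.v *)
From HB Require Import structures.
From mathcomp Require Import all_boot all_order all_algebra.
From mathcomp Require Import all_classical all_reals all_analysis.
Set Implicit Arguments. Unset Strict Implicit. Unset Printing Implicit Defensive.
Import Order.TTheory GRing.Theory Num.Theory.
Local Open Scope ring_scope.

Definition in_simplex (R : realType) (n : nat) (p : 'I_n -> R) : Prop :=
  (forall i, 0 <= p i) /\ \sum_(i < n) p i = 1.

Definition xlogx (R : realType) (x : R) : R := if x == 0 then 0 else x * ln x.

Definition supnorm (R : realType) (n : nat) (p : 'I_n -> R) : R :=
  \big[Num.max/0]_(i < n) `|p i|.

Definition uniform (R : realType) (n : nat) : 'I_n -> R := fun _ => n%:R^-1.

(* Main.v *)
Require Import Defs.
From HB Require Import structures.
From mathcomp Require Import all_boot all_order all_algebra.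
From mathcomp Require Import all_classical all_reals all_analysis.
From mathcomp Require Import ring lra.
Import Order.TTheory GRing.Theory Num.Theory.
Local Open Scope ring_scope.

Lemma ln_le_sub1 (R : realType) (y : R) : 0 < y -> ln y <= y - 1.
Proof.
move=> y0; have := @le_ln1Dx R (y - 1).
rewrite (addrC 1) subrK; apply; lra.
Qed.

(* per-term bounds, x = n p *)
Lemma term_upper (R : realType) (x : R) : 0 <= x -> x * ln x <= x * (x - 1).
Proof.
rewrite le_eqVlt => /orP[/eqP<-|x0]; first by rewrite !mul0r.
apply: ler_wpM2l; [lra| exact: ln_le_sub1].
Qed.

Lemma term_lower0 (R : realType) (x c : R) : 0 < x -> x + 1 <= c ->
  (x - 1) ^+ 2 <= 2 * c * (x * ln x - x + 1).
Proof.
move=> x0 hc.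
have [s s0 xs] : exists2 s : R, 0 < s & x = s * s.
  by exists (Num.sqrt x); rewrite ?sqrtr_gt0 // -expr2 sqr_sqrtr ?ltW.
have lnx : ln x = ln s + ln s by rewrite xs lnM // posrE.
have hb : 1 - s^-1 <= ln s.
  have := @ln_le_sub1 R s^-1; rewrite invr_gt0 => /(_ s0); rewrite lnV ?posrE //; lra.
have hb' : s - 1 <= s * ln s.
  have := ler_wpM2l (ltW s0) hb; rewrite mulrBr mulr1 mulfV ?gt_eqF //.
have f1 : (s - 1) ^+ 2 <= x * ln x - x + 1.
  have := ler_wpM2l (ltW s0) hb'.
  rewrite lnx xs; move: (ln s) => L h.
  have -> : s * s * (L + L) = 2 * (s * (s * L)) by ring.
  lra.
have f2 : (x - 1) ^+ 2 <= 2 * (x + 1) * (s - 1) ^+ 2.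
  rewrite xs -subr_ge0.
  have -> : 2 * (s * s + 1) * (s - 1) ^+ 2 - (s * s - 1) ^+ 2 = ((s - 1) ^+ 2) ^+ 2 by ring.
  exact: sqr_ge0.
have sq0 : 0 <= (s - 1) ^+ 2 by rewrite sqr_ge0.
apply: (le_trans f2); rewrite -!mulrA ler_pM2l //.
apply: ler_pM; lra.
Qed.
Lemma term_lower (R : realType) (x c : R) : 0 <= x -> x + 1 <= c ->
  (x - 1) ^+ 2 <= 2 * c * (x * ln x - x + 1).
Proof.
rewrite le_eqVlt => /orP[/eqP<-|x0]; last exact: term_lower0.
rewrite !mul0r !add0r => hc.
rewrite sqrrN expr1n oppr0 add0r mulr1; lra.
Qed.

Theorem proposition1 (R : realType) (n : nat) (p : 'I_n -> R) :
  in_simplex p ->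
  let S := \sum_(i < n) xlogx (p i) + ln (n%:R) in
  let Q := n%:R * \sum_(i < n) p i ^+ 2 - 1 in
  ((Q / (2 * (n%:R * supnorm p + 1)) <= S) /\ (S <= Q)) /\
  (p <> @uniform R n ->
     (1 / (2 * (n%:R * supnorm p + 1)) <= S / Q) /\ (S / Q <= 1)).
Proof.
move=> [p0 p1] S Q.
have n0 : (0 < n)%N.
  by case: n p p0 p1 {S Q} => // p p0; rewrite big_ord0 => /eqP; rewrite eq_sym oner_eq0.
set N : R := n%:R.
have N0 : 0 < N by rewrite ltr0n.
set M := supnorm p.
have hM : forall i, p i <= M.
  move=> i; apply: (le_trans (ler_norm (p i))).
  exact: (le_bigmax 0 (fun i => `|p i|) i).
have M0 : 0 <= M by apply: le_trans (hM (Ordinal n0)).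
set c := N * M + 1.
set e := fun i => xlogx (p i) + p i * ln N - p i + N^-1.
set q := fun i => N * p i ^+ 2 - 2 * p i + N^-1.
have hNe : forall i, N * e i = (N * p i) * ln (N * p i) - N * p i + 1.
  move=> i; rewrite /e /xlogx.
  have := p0 i; rewrite le_eqVlt => /orP[/eqP<-|pi0].
    by rewrite eqxx !(mulr0, mul0r, addr0, subr0, add0r) mulfV ?gt_eqF.
  rewrite gt_eqF // lnM ?posrE //.
  by rewrite !mulrDr mulfV ?gt_eqF //; ring.
have hNq : forall i, N * q i = (N * p i - 1) ^+ 2.
  by move=> i; rewrite /q !mulrDr mulfV ?gt_eqF //; ring.
have hup : forall i, e i <= q i.
  move=> i; rewrite -(ler_pM2l N0) hNe hNq.
  have := @term_upper R _ (mulr_ge0 (ltW N0) (p0 i)); lra.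
have hlo : forall i, q i / (2 * c) <= e i.
  move=> i; have c0 : 0 < 2 * c by rewrite /c; nra.
  rewrite ler_pdivrMr // -(ler_pM2l N0) mulrA hNq.
  rewrite hNe [X in _ <= X]mulrC.
  apply: term_lower; first exact: mulr_ge0 (ltW N0) (p0 i).
  rewrite /c; have := hM i; nra.
have hS : S = \sum_i e i.
  rewrite /S /e !big_split /= -big_distrl /= p1 sumr_const card_ord.
  rewrite sumrN p1 mul1r -[N^-1 *+ n]mulr_natr -/N mulVf ?gt_eqF //; ring.
have hQ : Q = \sum_i q i.
  rewrite /Q /q !big_split /= sumr_const card_ord.
  rewrite sumrN -!big_distrr /= p1 -[N^-1 *+ n]mulr_natr -/N mulVf ?gt_eqF //; ring.
have part1 : Q / (2 * c) <= S /\ S <= Q.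
  split; last by rewrite hS hQ; apply: ler_sum => i _; exact: hup.
  by rewrite hS hQ mulr_suml; apply: ler_sum => i _; exact: hlo.
split; first exact: part1.
move=> hu.
have Q0 : 0 < Q.
  have qge : forall i, 0 <= q i.
    by move=> i; rewrite -(pmulr_rge0 _ N0) hNq sqr_ge0.
  rewrite lt_def andbC hQ sumr_ge0 //= ; apply/negP => /eqP/psumr_eq0P H.
  apply: hu; apply: funext => i; rewrite /uniform.
  have := H (fun j _ => qge j) i isT => /(congr1 (fun t => N * t)); rewrite hNq mulr0 => /eqP.
  rewrite sqrf_eq0 subr_eq0 => /eqP h.
  have -> : p i = (N * p i) / N by rewrite mulrAC mulfV ?gt_eqF // mul1r.
  by rewrite h mul1r.
have [h1 h2] := part1.
split; last by rewrite ler_pdivrMr // mul1r.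
rewrite ler_pdivlMr //.
by rewrite mul1r mulrC.
Qed.
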